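(* The dendriform coalgebra $(\mathcal{A},\Delta_\leftarrow,\Delta_\rightarrow)$ is connected: for every $a\in\mathcal{A}^+$ there exists $n_a\in\mathbb{N}$ such that $P(a)=0$ for all $P\in\mathcal{P}(n_a)$.
   Context: Trees: planar rooted trees in which every internal vertex has at least two children; the root vertex hangs from a trunk edge; leaves are edges without upper vertex; $|$ is the one-leaf tree; $T_n$ = trees with $n+1$ leaves, $\mathcal A_n=\mathbb K T_n$, $\mathcal A=\bigoplus_n\mathcal A_n$, $\mathcal A^+=\bigoplus_{n\ge1}\mathcal A_n$, with the product $*$ of the Loday–Ronco free tridendriform algebra ($x_0\vee\cdots\vee x_k$ grafts trees on a new root; for $x=x^{(0)}\vee\cdots\vee x^{(k)}$, $y=y^{(0)}\vee\cdots\vee y^{(l)}$: $x\prec y=x^{(0)}\vee\cdots\vee x^{(k-1)}\vee(x^{(k)}*y)$, $x\cdot y=x^{(0)}\vee\cdots\vee x^{(k-1)}\vee(x^{(k)}*y^{(0)})\vee y^{(1)}\vee\cdots\vee y^{(l)}$, $x\succ y=(x*y^{(0)})\vee y^{(1)}\vee\cdots\vee y^{(l)}$, $*=\prec+\cdot+\succ$, $|*z=z*|=z$). Admissible cuts: internal edges join two internal vertices; a cut is a nonempty set of internal edges, plus the empty and total (below the root) cuts; admissible if every root-to-leaf path meets at most one chosen edge; $P^c(t)$ is the component containing the root, $G^c(t)=G^c_1(t)*\cdots*G^c_m(t)$ the product of the cut-off trees from left to right (empty cut: $P^c=t,G^c=|$; total cut: $P^c=|,G^c=t$). For $t\ne|$: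 $\Delta_\leftarrow(t)$ is the sum of $G^c(t)\otimes P^c(t)$ over admissible cuts with the right-most leaf of $t$ not in $P^c(t)$, $\Delta_\rightarrow(t)$ the sum over the others; the reduced maps are $\tilde\Delta_\leftarrow(t)=\Delta_\leftarrow(t)-t\otimes|$, $\tilde\Delta_\rightarrow(t)=\Delta_\rightarrow(t)-|\otimes t$, maps $\mathcal A^+\to\mathcal A^+\otimes\mathcal A^+$. $\mathcal P(0)=\{\mathrm{Id}\}$, $\mathcal P(1)=\{\tilde\Delta_\leftarrow,\tilde\Delta_\rightarrow\}$, and $\mathcal P(n)$ is the set of maps $(\mathrm{Id}^{\otimes(i-1)}\otimes D\otimes\mathrm{Id}^{\otimes(n-i)})\circ P$ with $P\in\mathcal P(n-1)$, $i\in\{1,\dots,n\}$, $D\in\{\tilde\Delta_\leftarrow,\tilde\Delta_\rightarrow\}$. *)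

(* Defs.v *)
From HB Require Import structures.
From mathcomp Require Import all_boot all_order all_algebra.
Set Implicit Arguments. Unset Strict Implicit. Unset Printing Implicit Defensive.
Import GRing.Theory.
Local Open Scope ring_scope.

(* Planar rooted trees: a tree is a vertex with its ordered list of children.
   [Node [::]] is the one-leaf tree | (a bare edge); a child equal to
   [Node [::]] is a leaf, any other child is an internal vertex joined to its
   parent by an internal edge. *)
Inductive tree := Node of seq tree.

Definition leaf := Node [::].

Fixpoint tree_enc (t : tree) : GenTree.tree unit :=
  let: Node cs := t in GenTree.Node 0 (map tree_enc cs).
Fixpoint tree_dec (g : GenTree.tree unit) : tree :=
  match g with
  | GenTree.Leaf _ => Node [::]
  | GenTree.Node _ gs => Node (map tree_dec gs)
  end.
Fixpoint tree_encK (t : tree) : tree_dec (tree_enc t) = t :=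
  match t return tree_dec (tree_enc t) = t with
  | Node cs => f_equal Node
      ((fix aux (cs : seq tree) : map tree_dec (map tree_enc cs) = cs :=
          match cs with
          | [::] => erefl
          | c :: cs' => f_equal2 cons (tree_encK c) (aux cs')
          end) cs)
  end.
HB.instance Definition _ := Countable.copy tree (can_type tree_encK).

Fixpoint valid_tree (t : tree) : bool :=
  let: Node cs := t in (cs == [::]) || ((1 < size cs)%N && all valid_tree cs).

Fixpoint tsize (t : tree) : nat :=
  let: Node cs := t in (sumn (map tsize cs)).+1.

(* The product * of the free tridendriform algebra on basis trees;
   the result is the (multiset) sum of the listed trees.
   For x = x0 v ... v xk, y = y0 v ... v yl :
   x < y = x0 v..v x(k-1) v (xk * y),
   x . y = x0 v..v x(k-1) v (xk * y0) v y1 v..v yl,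
   x > y = (x * y0) v y1 v..v yl,   | * z = z * | = z. *)
Fixpoint mulF (f : nat) (x y : tree) : seq tree :=
  match f with
  | 0 => [::]
  | f'.+1 =>
    match x, y with
    | Node [::], _ => [:: y]
    | _, Node [::] => [:: x]
    | Node (x0 :: xs), Node (y0 :: ys) =>
        let xk := last x0 xs in
        let xi := belast x0 xs in
        [seq Node (rcons xi z) | z <- mulF f' xk y]
        ++ [seq Node (xi ++ z :: ys) | z <- mulF f' xk y0]
        ++ [seq Node (z :: ys) | z <- mulF f' x y0]
    end
  end.

Definition mul (x y : tree) : seq tree := mulF (tsize x + tsize y) x y.

Definition Gprod (gs : seq tree) : seq tree :=
  foldr (fun g acc => flatten [seq mul g h | h <- acc]) [:: leaf] gs.

(* Combining the cut choices made independently in each child subtree: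
   returns (list of children of P, cut-off trees from left to right,
            whether the right-most leaf stays in P). *)
Fixpoint combine_cuts (os : seq (seq (tree * seq tree * bool)))
  : seq (seq tree * seq tree * bool) :=
  match os with
  | [::] => [:: ([::], [::], true)]
  | o :: os' =>
      flatten [seq [seq (x.1.1 :: y.1.1, x.1.2 ++ y.1.2,
                         if os' is [::] then x.2 else y.2)
                   | y <- combine_cuts os'] | x <- o]
  end.

(* All admissible cuts of t that do not cut below the root (the empty cut
   included), as triples (P^c(t), [G^c_1; ...; G^c_m], right-most leaf of t
   lies in P^c(t)).  Cutting the edge below an internal child c replaces c
   by a leaf in the root component and cuts off c. *)
Fixpoint cutsI (t : tree) : seq (tree * seq tree * bool) :=
  let: Node cs := t in
  if cs is [::] then [:: (t, [::], true)] else
  [seq (Node x.1.1, x.1.2, x.2) | x <- combine_cuts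
     (map (fun c => (if c is Node (_ :: _) then [:: (leaf, [:: c], false)]
                     else [::]) ++ cutsI c) cs)].

(* all admissible cuts, including the total cut *)
Definition cuts (t : tree) : seq (tree * seq tree * bool) :=
  cutsI t ++ [:: (leaf, [:: t], false)].

(* Delta_<-(t) and Delta_->(t), as multisets of pairs G (x) P *)
Definition DeltaL (t : tree) : seq (tree * tree) :=
  flatten [seq [seq (g, x.1.1) | g <- Gprod x.1.2] | x <- cuts t & ~~ x.2].
Definition DeltaR (t : tree) : seq (tree * tree) :=
  flatten [seq [seq (g, x.1.1) | g <- Gprod x.1.2] | x <- cuts t & x.2].

Section Linear.
Variable K : fieldType.

(* an element of A^{(x) k}: formal K-linear combination of words of trees *)
Definition lin := seq (K * seq tree).

Definition coef (x : lin) (w : seq tree) : K :=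
  \sum_(p <- x) (if p.2 == w then p.1 else 0).

(* reduced coproducts on basis trees (set to 0 on |, outside A^+) *)
Definition redL (t : tree) : seq (K * (tree * tree)) :=
  if t == leaf then [::]
  else [seq (1, gp) | gp <- DeltaL t] ++ [:: (-1, (t, leaf))].
Definition redR (t : tree) : seq (K * (tree * tree)) :=
  if t == leaf then [::]
  else [seq (1, gp) | gp <- DeltaR t] ++ [:: (-1, (leaf, t))].

(* Id^{(x) i} (x) D (x) Id^{..} : D acting on the slot of index i (0-based) *)
Definition applyAt (D : tree -> seq (K * (tree * tree))) (i : nat) (x : lin)
  : lin :=
  flatten [seq [seq (p.1 * q.1, take i p.2 ++ [:: q.2.1; q.2.2] ++ drop i.+1 p.2)
               | q <- D (nth leaf p.2 i)] | p <- x].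

(* a sequence of operations (b, i): b = true means tilde Delta_<-,
   b = false means tilde Delta_->, acting on the slot i (0-based) *)
Definition evalP (ops : seq (bool * nat)) (x : lin) : lin :=
  foldl (fun y o => applyAt (if o.1 then redL else redR) o.2 y) x ops.

End Linear.

(* ops describes an element of P(n): size n and the j-th (0-based) operation
   acts on one of the j+1 tensor factors available at that stage *)
Definition opsP (n : nat) (ops : seq (bool * nat)) : Prop :=
  size ops = n /\ forall j, (j < n)%N -> ((nth (true, 0%N) ops j).2 < j.+1)%N.

Definition embed1 (K : fieldType) (a : seq (K * tree)) : lin K :=
  [seq (p.1, [:: p.2]) | p <- a].

(* a lies in A^+ : a linear combination of trees with at least 2 leaves *)
Definition inAplus (K : fieldType) (a : seq (K * tree)) : bool :=
  all (fun p => valid_tree p.2 && (p.2 != leaf)) a.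

(* Main.v *)
Require Import Defs.
From mathcomp Require Import all_boot all_order all_algebra.
From mathcomp Require Import zify.
Set Implicit Arguments. Unset Strict Implicit. Unset Printing Implicit Defensive.

Fixpoint mu (t : tree) : nat :=
  let: Node cs := t in if cs is [::] then 0 else (sumn (map mu cs)).+1.

Lemma muE cs : cs != [::] -> mu (Node cs) = (sumn (map mu cs)).+1.
Proof. by case: cs. Qed.

Lemma nodeN cs : cs != [::] -> Node cs != leaf.
Proof. by case: cs => // c cs _; apply/eqP. Qed.

Lemma mu_pos t : t != leaf -> 0 < mu t.
Proof. by case: t => -[|c cs] //; rewrite eqxx. Qed.

Lemma tree_ind' (P : tree -> Prop) :
  (forall cs, (forall c, c \in cs -> P c) -> P (Node cs)) -> forall t, P t.
Proof.
move=> H; fix F 1 => -[cs]; apply: H.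
move: cs; fix G 1. move=> -[|c cs] x.
  by rewrite in_nil => H0; discriminate H0.
rewrite in_cons => /orP[/eqP->|]. exact: F. exact: G.
Qed.

Lemma mulF_leaf f x y z : z \in mulF f x y -> x != leaf -> z != leaf.
Proof.
case: f => [|f] //=; case: x => -[|x0 xs] // ; case: y => -[|y0 ys].
  by rewrite inE => /eqP->.
rewrite !mem_cat => /orP[|/orP[]] /mapP[z' _ ->] _; apply: nodeN => //.
  by case: (belast x0 xs).
by case: (belast x0 xs).
Qed.

Lemma sumn_rcons s x : sumn (rcons s x) = sumn s + x.
Proof. by rewrite -cats1 sumn_cat /= addn0. Qed.

Lemma mulF_mu f x y z : z \in mulF f x y -> mu z <= mu x + mu y.
Proof.
elim: f x y z => [|f IH] x y z //=; case: x => -[|x0 xs].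
  by rewrite inE => /eqP->.
case: y => -[|y0 ys]; first by rewrite inE => /eqP->; rewrite addn0.
have ex : mu (Node (x0 :: xs)) =
   (sumn (map mu (belast x0 xs)) + mu (last x0 xs)).+1.
  by rewrite muE // lastI map_rcons sumn_rcons.
rewrite ex muE //= !mem_cat => /orP[|/orP[]] /mapP[z' hz ->].
- have := IH _ _ _ hz; rewrite [mu (Node (rcons _ _))]muE; last by case: (belast x0 xs).
  by rewrite map_rcons sumn_rcons /=; lia.
- have := IH _ _ _ hz; rewrite [mu (Node (_ ++ _))]muE; last by case: (belast x0 xs).
  by rewrite map_cat sumn_cat /=; lia.
- have := IH _ _ _ hz; rewrite [mu (Node (z' :: _))]muE // ex /=; lia.
Qed.

Lemma Gprod_prop gs z : z \in Gprod gs ->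
  mu z <= sumn (map mu gs) /\ (gs != [::] -> all (fun g => g != leaf) gs -> z != leaf).
Proof.
elim: gs z => [|g gs IH] z /=; first by rewrite inE => /eqP->.
move=> /flatten_mapP[h /IH[h1 _] hz]; split.
  by have := mulF_mu hz; lia.
by move=> _ /andP[gl _]; apply: mulF_leaf hz gl.
Qed.

Definition nl (t : tree) := t != leaf.

Lemma cc_prop cs (f : tree -> seq (tree * seq tree * bool)) :
  (forall c, c \in cs -> forall x, x \in f c ->
     mu x.1.1 + sumn (map mu x.1.2) = mu c /\ all nl x.1.2) ->
  forall y, y \in combine_cuts (map f cs) ->
  [/\ sumn (map mu y.1.1) + sumn (map mu y.1.2) = sumn (map mu cs),
      all nl y.1.2 & size y.1.1 = size cs].
Proof.
elim: cs => [|c cs IH] H y /=; first by rewrite inE => /eqP->.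
move=> /flatten_mapP[x xf /mapP[y' y'c ->]] /=.
have [h1 h2] := H c (mem_head _ _) x xf.
have [h3 h4 h5] := IH (fun c' hc' => H c' (@mem_behead _ (c :: cs) c' hc')) y' y'c.
rewrite map_cat sumn_cat all_cat h2 h4 h5 /=; split => //. by rewrite -h1 -h3 addnACA.
Qed.

Definition optsF (c : tree) : seq (tree * seq tree * bool) :=
  (if c is Node (_ :: _) then [:: (leaf, [:: c], false)] else [::]) ++ cutsI c.

Lemma cutsI_node c cs : cutsI (Node (c :: cs)) =
  [seq (Node x.1.1, x.1.2, x.2) | x <- combine_cuts (map optsF (c :: cs))].
Proof. by []. Qed.

Lemma cutsI_prop t x : x \in cutsI t ->
  [/\ mu x.1.1 + sumn (map mu x.1.2) = mu t, all nl x.1.2 &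
      (t != leaf -> x.1.1 != leaf)].
Proof.
elim/tree_ind': t x => cs IH x.
case: cs IH => [|c cs] IH; first by rewrite /= inE => /eqP->; rewrite eqxx.
rewrite cutsI_node => /mapP[y hy ->] /=.
have [|h1 h2 h3] := cc_prop _ hy.
  move=> c' hc' x'; rewrite /optsF mem_cat => /orP[].
    case: c' {hc'} => -[|c1 cs1] //; rewrite inE => /eqP-> /=.
    by rewrite addn0 andbT; split=> //; apply: nodeN.
  by move=> /(IH c' hc')[-> ->].
move: h1 h2 h3; case: y {hy} => [[ps gs] b] /= h1 h2 h3.
case: ps h1 h3 => [|p ps] // h1 h3.
split => //; last by move=> _; apply: nodeN.
by rewrite /= in h1 *; rewrite addSn h1.
Qed.

Lemma flatten_if (A B : Type) (P : pred A) (g : A -> seq B) s :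
  flatten [seq (if P x then g x else [::]) | x <- s] =
  flatten [seq g x | x <- filter P s].
Proof. by elim: s => //= x s IH; case: (P x) => //=; rewrite IH. Qed.

Lemma cc_empty cs (f : tree -> seq (tree * seq tree * bool)) :
  (forall c, c \in cs -> [seq x <- f c | x.1.2 == [::]] = [:: (c, [::], true)]) ->
  [seq y <- combine_cuts (map f cs) | y.1.2 == [::]] = [:: (cs, [::], true)].
Proof.
elim: cs => [|c cs IH] H //=.
rewrite filter_flatten -map_comp.
have -> : [seq (filter (fun y => y.1.2 == [::]) \o
    (fun x => [seq (x.1.1 :: y.1.1, x.1.2 ++ y.1.2,
                    if [seq f i | i <- cs] is [::] then x.2 else y.2)
              | y <- combine_cuts [seq f i | i <- cs]])) x0 | x0 <- f c]
  = [seq (if x.1.2 == [::] then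
        [seq (x.1.1 :: y.1.1, x.1.2 ++ y.1.2,
                    if [seq f i | i <- cs] is [::] then x.2 else y.2)
              | y <- [seq y <- combine_cuts [seq f i | i <- cs] | y.1.2 == [::]]]
        else [::]) | x <- f c].
  apply: eq_map => x /=; rewrite filter_map; case: eqP => e.
    by congr map; apply: eq_filter => y /=; rewrite e.
  by apply/eqP; rewrite -size_eq0 size_map size_filter -leqn0 leqNgt -has_count;
     apply/hasP => -[y _ /=]; case: (x.1.2) e.
rewrite flatten_if (H c (mem_head _ _)) IH; last by move=> c' hc'; apply: H; rewrite inE hc' orbT.
by case: cs {IH H}.
Qed.

Lemma cutsI_empty t : [seq x <- cutsI t | x.1.2 == [::]] = [:: (t, [::], true)].
Proof.
elim/tree_ind': t => cs IH.
case: cs IH => [|c cs] IH //.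
rewrite cutsI_node filter_map /preim /=.
rewrite (eq_filter (a2 := fun y => y.1.2 == [::])) //.
rewrite (@cc_empty (c :: cs)) // => c' hc'.
rewrite /optsF filter_cat IH //.
by case: c' {hc'} => -[|? ?].
Qed.

Import GRing.Theory.
Local Open Scope ring_scope.

Section Lin.
Variable K : fieldType.

Definition coefT (T : eqType) (x : seq (K * T)) (u : T) : K :=
  \sum_(p <- x) (if p.2 == u then p.1 else 0).

Definition equivT (T : eqType) (x y : seq (K * T)) := forall u, coefT x u = coefT y u.

Lemma sum_pick (T : eqType) (U : seq T) (v : T) (c : T -> K) :
  uniq U -> v \in U -> \sum_(u <- U) (if v == u then c u else 0) = c v.
Proof.
move=> uU vU; rewrite (bigD1_seq v) //= eqxx big1 ?addr0 //.
by move=> u; rewrite eq_sym => /negbTE ->.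
Qed.

Lemma sum_coef (T : eqType) (x : seq (K * T)) (U : seq T) (G : T -> K) :
  uniq U -> {subset map snd x <= U} ->
  \sum_(p <- x) p.1 * G p.2 = \sum_(u <- U) coefT x u * G u.
Proof.
move=> uU sub.
under [RHS]eq_bigr => u _ do rewrite /coefT mulr_suml.
rewrite exchange_big /=; apply: eq_big_seq => p px.
have pU : p.2 \in U by apply: sub; apply: map_f.
rewrite -(sum_pick (fun u => p.1 * G u) uU pU).
by apply: eq_bigr => u _; case: eqP; rewrite ?mul0r.
Qed.

Lemma equiv_sum (T : eqType) (x y : seq (K * T)) (G : T -> K) :
  equivT x y -> \sum_(p <- x) p.1 * G p.2 = \sum_(p <- y) p.1 * G p.2.
Proof.
move=> e; set U := undup (map snd x ++ map snd y).
have uU : uniq U by apply: undup_uniq.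
rewrite (@sum_coef _ x U) // ?(@sum_coef _ y U) //.
- by apply: eq_bigr => u _; rewrite e.
- by move=> v vy; rewrite mem_undup mem_cat vy orbT.
- by move=> v vx; rewrite mem_undup mem_cat vx.
Qed.

Lemma coefT_cat (T : eqType) (x y : seq (K * T)) u :
  coefT (x ++ y) u = coefT x u + coefT y u.
Proof. by rewrite /coefT big_cat. Qed.

Lemma coefT_perm (T : eqType) (x y : seq (K * T)) :
  perm_eq x y -> equivT x y.
Proof. by move=> pxy u; apply: perm_big. Qed.

Definition mkw (i : nat) (u : seq tree) (q : tree * tree) :=
  take i u ++ [:: q.1; q.2] ++ drop i.+1 u.

Lemma coef_applyAt D i (x : lin K) w :
  coef (applyAt D i x) w =
  \sum_(p <- x) p.1 * \sum_(q <- D (nth leaf p.2 i)) q.1 *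
        (if mkw i p.2 q.2 == w then 1 else 0).
Proof.
rewrite /coef /applyAt big_flatten big_map; apply: eq_bigr => p _.
rewrite big_map mulr_sumr; apply: eq_bigr => q _ /=.
by rewrite /mkw /=; case: eqP => _; rewrite ?mulr1 ?mulr0.
Qed.

Lemma applyAt_equiv D D' i (x x' : lin K) :
  equivT x x' -> (forall t, equivT (D t) (D' t)) ->
  equivT (applyAt D i x) (applyAt D' i x').
Proof.
move=> ex eD w; change (coef (applyAt D i x) w = coef (applyAt D' i x') w); rewrite !coef_applyAt.
rewrite (equiv_sum (fun u => \sum_(q <- D (nth leaf u i)) q.1 *
        (if mkw i u q.2 == w then 1 else 0)) ex).
apply: eq_bigr => p _; congr (_ * _).
exact: (equiv_sum (fun q => if mkw i p.2 q == w then 1 else 0) (eD _)).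
Qed.

End Lin.

Section Main.
Variable K : fieldType.

Definition Hc (x : tree * seq tree * bool) : seq (tree * tree) :=
  [seq (g, x.1.1) | g <- Gprod x.1.2].

Definition DL' (b : bool) (t : tree) : seq (tree * tree) :=
  flatten [seq Hc x | x <- cutsI t & (x.2 == b) && (x.1.2 != [::])].

Definition Dg (b : bool) (t : tree) : seq (K * (tree * tree)) :=
  if t == leaf then [::] else [seq (1, gp) | gp <- DL' b t].

Lemma Gprod1 t : t != leaf -> Gprod [:: t] = [:: t].
Proof.
case: t => -[|c cs]; first by rewrite eqxx.
by move=> _; rewrite /Gprod /= /mul /=.
Qed.

Lemma mul_leaf t : t != leaf -> Defs.mul t leaf = [:: t].
Proof. by case: t => -[|c cs]; first by rewrite eqxx. Qed.

Lemma cancel_pair (T : eqType) (s : seq (K * T)) (p : T) :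
  equivT (s ++ [:: (1, p); (-1, p)]) s.
Proof.
move=> u; rewrite coefT_cat /coefT !big_cons big_nil.
by case: eqP => _; rewrite ?addr0 // addrN addr0.
Qed.

Lemma redL_equiv t : equivT (redL K t) (Dg false t).
Proof.
rewrite /redL /Dg; case: ifP => tl //.
have -> : DeltaL t = DL' false t ++ [:: (t, leaf)].
  rewrite /DeltaL /cuts filter_cat map_cat flatten_cat /= mul_leaf ?tl //=.
  rewrite /DL' /Hc; congr (flatten _ ++ _); congr map.
  apply: eq_in_filter => x hx.
  have [e|e] := eqVneq x.1.2 [::]; last by rewrite andbT; case: (x.2).
  have : x \in [seq x <- cutsI t | x.1.2 == [::]] by rewrite mem_filter e eqxx.
  by rewrite cutsI_empty inE => /eqP->.
by rewrite map_cat -catA; apply: cancel_pair.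
Qed.

Lemma redR_equiv t : equivT (redR K t) (Dg true t).
Proof.
rewrite /redR /Dg; case: ifP => tl //.
have P1 : perm_eq [seq x <- cutsI t | x.2]
   ([seq x <- cutsI t | (x.2 == true) && (x.1.2 != [::])] ++ [:: (t, [::], true)]).
  rewrite -(perm_filterC (fun x : tree * seq tree * bool => x.1.2 != [::])).
  rewrite -filter_predI -filter_predI.
  have -> : [seq x <- cutsI t | predI (predC (fun x : tree * seq tree * bool => x.1.2 != [::])) (fun x => x.2) x]
      = [seq x <- [seq x <- cutsI t | x.1.2 == [::]] | x.2].
    by rewrite -filter_predI; apply: eq_filter => x /=; rewrite negbK andbC.
  rewrite cutsI_empty /=; apply/perm_cat => //.
  by rewrite (eq_filter (a2 := fun x : tree * seq tree * bool => (x.2 == true) && (x.1.2 != [::]))) // => x /=; rewrite andbC eqb_id.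
have P2 : perm_eq (DeltaR t) (DL' true t ++ [:: (leaf, t)]).
  rewrite /DeltaR /cuts filter_cat /= cats0.
  have := perm_flatten (perm_map Hc P1); rewrite map_cat flatten_cat /=.
  by rewrite /DL'.
move=> u; rewrite coefT_cat (coefT_perm (perm_map _ P2)) map_cat -coefT_cat -catA.
exact: cancel_pair.
Qed.

Lemma Dg_good b t q : q \in Dg b t ->
  [/\ nl q.2.1, nl q.2.2 & (mu q.2.1 + mu q.2.2 <= mu t)%N].
Proof.
rewrite /Dg; case: ifP => tl //.
move=> /mapP[gp /flatten_mapP[x hx /mapP[g hg ->]] ->] /=.
move: hx; rewrite mem_filter => /andP[/andP[_ ne] hx].
have [h1 h2 h3] := cutsI_prop hx.
have [m1 m2] := Gprod_prop hg.
split; first exact: m2.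
  by apply: h3; rewrite tl.
by rewrite -h1 addnC leq_add2l.
Qed.

Definition good (N n : nat) (w : seq tree) :=
  [&& (n < size w)%N, all nl w & (sumn (map mu w) <= N)%N].

Lemma size_le_mu w : all nl w -> (size w <= sumn (map mu w))%N.
Proof.
elim: w => //= c w IH /andP[hc hw]; have := mu_pos hc; have := IH hw; lia.
Qed.

Lemma applyAt_good b i N n (y : lin K) :
  all (fun p => good N n p.2) y -> all (fun p => good N n.+1 p.2) (applyAt (Dg b) i y).
Proof.
move=> H; apply/allP => z /flatten_mapP[[k w] py /mapP[q hq ->]] /=.
have /= := allP H _ py.
have hi : (i < size w)%N.
  by rewrite ltnNge; apply/negP => hs; move: hq; rewrite nth_default // /Dg eqxx.
have ew : w = take i w ++ nth leaf w i :: drop i.+1 w by rewrite -drop_nth // cat_take_drop.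
have [q1 q2 q3] := Dg_good hq.
move: hq q3 ew; move: (take i w) (drop i.+1 w) (nth leaf w i) => A B c _ q3 ->.
rewrite /good !size_cat !all_cat !map_cat !sumn_cat /= q1 q2 /=.
move=> /and3P[s1 /andP[-> /andP[_ ->]] s3] /=; apply/andP; split; first by rewrite addnS ltnS.
apply: leq_trans s3; by rewrite leq_add2l addnA leq_add2r.
Qed.

Definition evalPg (ops : seq (bool * nat)) (x : lin K) : lin K :=
  foldl (fun y o => applyAt (Dg (~~ o.1)) o.2 y) x ops.

Lemma evalP_equiv ops (x x' : lin K) : equivT x x' -> equivT (evalP ops x) (evalPg ops x').
Proof.
elim: ops x x' => //= o ops IH x x' e; apply: IH; apply: applyAt_equiv => // t.
by case: (o.1) => /=; [apply: redL_equiv | apply: redR_equiv].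
Qed.

Lemma evalPg_good ops N n (y : lin K) :
  all (fun p => good N n p.2) y -> all (fun p => good N (n + size ops) p.2) (evalPg ops y).
Proof.
elim: ops n y => [|o ops IH] n y /=; first by rewrite addn0.
by move=> H; rewrite -addSnnS; apply: IH; apply: applyAt_good.
Qed.

Lemma le_sumn (T : Type) (f : T -> nat) s x : x \in map f s -> (x <= sumn (map f s))%N.
Proof.
elim: s => //= y s IH; rewrite inE => /orP[/eqP->|/IH]; lia.
Qed.

End Main.

Theorem mainTheorem13 (K : fieldType) (a : seq (K * tree)) :
  inAplus a ->
  exists na : nat, forall ops : seq (bool * nat), opsP na ops ->
    forall w : seq tree, coef (evalP ops (embed1 a)) w = 0%R.
Proof.
move=> ha; exists (sumn [seq mu p.2 | p <- a]) => ops [hs _] w.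
set N := sumn [seq mu p.2 | p <- a].
have e := @evalP_equiv K ops _ _ (fun u => erefl (coefT (embed1 a) u)).
change (coefT (evalP ops (embed1 a)) w = 0); rewrite e.
have G0 : all (fun p => good N 0 p.2) (embed1 a).
  apply/allP => p /mapP[q hq ->] /=; rewrite /good /= addn0.
  have /andP[_ hq2] := allP ha q hq; rewrite /nl hq2 /=.
  by apply: le_sumn; apply: map_f.
have := evalPg_good ops G0; rewrite hs add0n.
case: (evalPg ops (embed1 a)) => [|p l]; first by rewrite /coefT big_nil.
move=> /andP[/and3P[h1 h2 h3] _]; have := size_le_mu h2; lia.
Qed.
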